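(* Let $f\in\Gamma=\mathbb Q[p_1,p_3,p_5,\dots]$ be homogeneous of degree $n\ge1$, and write $$f=\sum_{\substack{\lambda\vdash n\\ \text{all parts odd}}}a_\lambda V_\lambda=\sum_{\lambda}b_\lambda P_\lambda,$$ the second sum over partitions $\lambda$ of $n$ into distinct parts. Then $\sum_\lambda a_\lambda=b_{(n)}$, the coefficient of the one-row function $P_n$.
   Context: Symmetric functions are in variables $x=(x_1,x_2,\dots)$ with rational coefficients, $p_k$ is the power sum, and $\Gamma=\mathbb Q[p_1,p_3,p_5,\dots]$. For a partition $\lambda$ with distinct parts, $P_\lambda$ is Schur's $P$-function (as in Macdonald, Ch. III.8); the $P_\lambda$ with $\lambda$ strict of size $n$ form a basis of the degree-$n$ part of $\Gamma$. The one-row functions satisfy $1+2\sum_{n\ge1}P_n(x)t^n=\prod_i\frac{1+x_it}{1-x_it}$. For any partition $\lambda$, $V_\lambda=P_{\lambda_1}P_{\lambda_2}\cdots$; the $V_\lambda$ with $\lambda$ having only odd parts form a basis of $\Gamma$. *)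

(* Defs.v *)
From HB Require Import structures.
From mathcomp Require Import all_boot all_order all_algebra all_fingroup.
From mathcomp Require Import mpoly.
From Stdlib Require Import ClassicalEpsilon.
Set Implicit Arguments. Unset Strict Implicit. Unset Printing Implicit Defensive.
Import Order.TTheory GRing.Theory Num.Theory.
Local Open Scope ring_scope.

(* Symmetric functions of degree n are modelled by their restriction to
   n variables x_0,...,x_(n-1), i.e. in {mpoly rat[n]}; the restriction map
   Lambda^n -> Q[x_1..x_n]^{S_n} is injective. *)

Fixpoint seqs_of_len (k n : nat) : seq (seq nat) :=
  match k with
  | 0 => [:: [::]]
  | k'.+1 => [seq x :: s | x <- iota 1 n, s <- seqs_of_len k' n]
  end.

(* All lists of length <= n with entries in 1..n (contains every partition of n). *)
Definition small_seqs (n : nat) : seq (seq nat) :=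
  undup (flatten [seq seqs_of_len k n | k <- iota 0 n.+1]).

Definition is_odd_partition (n : nat) (l : seq nat) : bool :=
  [&& sorted geq l, all (fun k => (0 < k)%N && odd k) l & sumn l == n].

Definition is_strict_partition (n : nat) (l : seq nat) : bool :=
  [&& sorted gtn l, all (fun k => (0 < k)%N) l & sumn l == n].

Definition odd_partitions (n : nat) : seq (seq nat) :=
  [seq l <- small_seqs n | is_odd_partition n l].

Definition strict_partitions (n : nat) : seq (seq nat) :=
  [seq l <- small_seqs n | is_strict_partition n l].

Section SchurP.
Variable m : nat.

Definition vdm : {mpoly rat[m]} :=
  \prod_(i < m) \prod_(j < m | (i < j)%N) ('X_i - 'X_j).

(* For strict lambda of length l:
   G_lambda = x^lambda * prod_{i<l, i<j} (x_i + x_j) * prod_{l<=i<j} (x_i - x_j)  (0-indexed),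
   so that  x^lambda prod_{i<l,i<j} (x_i+x_j)/(x_i-x_j) = G_lambda / vdm. *)
Definition schurG (lam : seq nat) : {mpoly rat[m]} :=
  (\prod_(i < m | (i < size lam)%N) 'X_i ^+ nth 0%N lam i)
  * (\prod_(i < m | (i < size lam)%N) \prod_(j < m | (i < j)%N) ('X_i + 'X_j))
  * (\prod_(i < m | (size lam <= i)%N) \prod_(j < m | (i < j)%N) ('X_i - 'X_j)).

Definition schurA (lam : seq nat) : {mpoly rat[m]} :=
  \sum_(s : 'S_m) (-1) ^+ odd_perm s *: msym s (schurG lam).

(* Macdonald III.8 (2.2):
     P_lambda(x_1..x_m) = sum_{w in S_m/S_{m-l}} w( x^lambda prod_{i<=l, i<j} (x_i+x_j)/(x_i-x_j) ),
   equivalently  (m-l)! * P_lambda * vdm = schurA lambda. *)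
Definition is_schurP (lam : seq nat) (p : {mpoly rat[m]}) : Prop :=
  ((m - size lam)`!)%:R *: (p * vdm) = schurA lam.

Definition schurP (lam : seq nat) : {mpoly rat[m]} :=
  epsilon (inhabits 0) (is_schurP lam).

Definition schurV (lam : seq nat) : {mpoly rat[m]} :=
  \prod_(k <- lam) schurP [:: k].

End SchurP.

(* Main.v *)
Require Import Defs.
From HB Require Import structures.
From mathcomp Require Import all_boot all_order all_algebra all_fingroup.
From mathcomp Require Import mpoly ring.
From Stdlib Require Import ClassicalEpsilon.
Import Order.TTheory GRing.Theory Num.Theory.
Local Open Scope ring_scope.
Set Implicit Arguments. Unset Strict Implicit. Unset Printing Implicit Defensive.

Lemma mmapU (N : nat) (S : comNzRingType) (f : rat -> S) (h : 'I_N -> S)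
  (g : {rmorphism {mpoly rat[N]} -> S}) :
  (forall c, g c%:MP = f c) -> (forall i, g 'X_i = h i) -> forall p, g p = mmap f h p.
Proof.
move=> Hc Hh p; rewrite {1}(mpolyE p) rmorph_sum /mmap; apply: eq_bigr => m _.
rewrite -mul_mpolyC rmorphM Hc mpolyXE_id rmorph_prod /mmap1; congr (_ * _).
by apply: eq_bigr => i _; rewrite rmorphXn Hh.
Qed.

Lemma mmapXi (N : nat) (S : comNzRingType) (f : {rmorphism rat -> S}) (h : 'I_N -> S) i :
  mmap f h ('X_i : {mpoly rat[N]}) = h i.
Proof. by rewrite mmapX mmap1U. Qed.

Lemma msymXi (N : nat) (s : 'S_N) i : msym s ('X_i : {mpoly rat[N]}) = 'X_(s i).
Proof. by rewrite /msym mmapXi. Qed.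

Lemma msymC (N : nat) (s : 'S_N) c : msym s (c%:MP : {mpoly rat[N]}) = c%:MP.
Proof. by rewrite /msym mmapC. Qed.

Lemma prodNN (S : comNzRingType) N (F : 'I_N -> 'I_N -> S) :
  \prod_(i < N) \prod_(j < N | (i < j)%N) (- F i j) =
  (\prod_(i < N) (-1) ^+ #|[pred j : 'I_N | (i < j)%N]|) *
  \prod_(i < N) \prod_(j < N | (i < j)%N) F i j.
Proof.
rewrite -big_split /=; apply: eq_bigr => i _.
by rewrite prodrN.
Qed.

Lemma vdm_sign (S : comNzRingType) N (a : 'I_N -> S) (w : 'S_N) :
  \prod_(i < N) \prod_(j < N | (i < j)%N) (a (w i) - a (w j)) =
  (-1) ^+ odd_perm w * \prod_(i < N) \prod_(j < N | (i < j)%N) (a i - a j).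
Proof.
have E (b : 'I_N -> S) : \prod_(i < N) \prod_(j < N | (i < j)%N) (b i - b j) =
   (\prod_(i < N) (-1) ^+ #|[pred j : 'I_N | (i < j)%N]|) *
   \det (Vandermonde N (\row_k b k)).
  rewrite det_Vandermonde -prodNN; apply: eq_bigr => i _; apply: eq_bigr => j _.
  by rewrite !mxE opprB.
rewrite !E mulrCA; congr (_ * _).
have -> : Vandermonde N (\row_k a (w k)) = col_perm w (Vandermonde N (\row_k a k)).
  by apply/matrixP => i j; rewrite !mxE.
by rewrite col_permE det_mulmx det_perm odd_permV mulrC.
Qed.

Lemma Xorder (a b : nat) (u v : {poly rat}) :
  'X^a * u = 'X^b * v -> u.[0] != 0 -> v.[0] != 0 -> a = b /\ u = v.
Proof.
wlog le_ab : a b u v / (a <= b)%N.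
  move=> W E hu hv; case: (leqP a b) => h; first exact: W.
  have [] := W b a v u (ltnW h) (esym E) hv hu; by move=> -> ->.
move=> E hu hv; have [d Hd] : exists d, b = (a + d)%N by exists (b - a)%N; rewrite subnKC.
subst b; move: E; rewrite exprD -mulrA => /mulfI E.
have {}E : u = 'X^d * v by apply: E; rewrite expf_neq0 // polyX_eq0.
clear le_ab; case: d E => [|d] E; first by rewrite addn0 E expr0 mul1r.
by move: hu; rewrite E hornerM hornerXn expr0n /= mul0r eqxx.
Qed.

Lemma mmap_eqh (N : nat) (S : comNzRingType) (f : rat -> S) (h1 h2 : 'I_N -> S) p :
  h1 =1 h2 -> mmap f h1 p = mmap f h2 p.
Proof. by move=> E; rewrite /mmap; apply: eq_bigr => m _; rewrite (mmap1_eq _ E). Qed.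

Lemma mmap_msym (N : nat) (S : comNzRingType) (f : {rmorphism rat -> S}) (h : 'I_N -> S) s p :
  mmap f h (msym s p) = mmap f (fun i => h (s i)) p.
Proof.
have := @mmapU N S f (fun i => h (s i)) (mmap f h \o msym s).
apply => [c|i] /=; first by rewrite msymC mmapC.
by rewrite msymXi mmapXi.
Qed.

Definition sig (N : nat) (a b : 'I_N) (p : {mpoly rat[N]}) : {mpoly rat[N]} :=
  mmap (@mpolyC N rat) (fun k => if k == b then 'X_a else 'X_k) p.

Lemma sigXi N (a b i : 'I_N) : sig a b 'X_i = if i == b then 'X_a else 'X_i.
Proof. by rewrite /sig mmapXi. Qed.

Lemma sig_div N (a b : 'I_N) p : exists q, p - sig a b p = ('X_b - 'X_a) * q.
Proof.
pose D (x : {mpoly rat[N]}) := exists q, x - sig a b x = ('X_b - 'X_a) * q.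
have DC c : D c%:MP by exists 0; rewrite /sig mmapC subrr mulr0.
have D1 : D 1 by have := DC 1; rewrite mpolyC1.
have D0 : D 0 by have := DC 0; rewrite mpolyC0.
have DD x y : D x -> D y -> D (x + y).
  move=> [qx Ex] [qy Ey]; exists (qx + qy).
  by rewrite /sig rmorphD /= opprD addrACA -/(sig a b x) -/(sig a b y) Ex Ey mulrDr.
have DM x y : D x -> D y -> D (x * y).
  move=> [qx Ex] [qy Ey]; exists (x * qy + qx * sig a b y).
  have -> : x * y - sig a b (x * y) = x * (y - sig a b y) + (x - sig a b x) * sig a b y.
    by rewrite /sig rmorphM /=; ring.
  by rewrite Ex Ey; ring.
have DX k : D 'X_k.
  exists (if k == b then 1 else 0); rewrite sigXi.
  have [->|nkb] := eqVneq k b; rewrite ?eqxx ?(negbTE nkb) ?mulr1 ?mulr0 ?subrr //.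
suff : D p by []. rewrite (mpolyE p); apply: (big_ind D); [exact: D0 | exact: DD | move=> m _].
rewrite -mul_mpolyC; apply: (DM) => //.
rewrite mpolyXE_id; apply: (big_ind D); [exact: D1 | exact: DM | move=> i _].
elim: (m i) => [|k IH]; first by rewrite expr0.
by rewrite exprS; apply: (DM).
Qed.

Lemma Xneq N (u v : 'I_N) : u != v -> ('X_u - 'X_v : {mpoly rat[N]}) != 0.
Proof.
move=> huv; apply/eqP => /(congr1 (mcoeff U_(u))).
by rewrite mcoeffB !mcoeffXU eqxx eq_sym (negbTE huv) subr0 mcoeff0 => /eqP; rewrite oner_eq0.
Qed.

Lemma sigF N (a b i j : 'I_N) : (a < b)%N -> (i < j)%N -> (i, j) != (a, b) ->
  sig a b ('X_i - 'X_j) != 0.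
Proof.
move=> ab ij ne; rewrite /sig rmorphB /= -!/(sig _ _ _) !sigXi.
have [ib|ib] := eqVneq i b; have [jb|jb] := eqVneq j b.
- by move: ij; rewrite ib jb ltnn.
- apply: Xneq; apply/eqP => aj; move: ij; rewrite ib -aj => /(ltn_trans ab).
  by rewrite ltnn.
- apply: Xneq; apply/eqP => ia; move: ne; by rewrite ia jb eqxx.
- by apply: Xneq; apply/eqP => E; move: ij; rewrite E ltnn.
Qed.

Lemma sig_tperm N (a b : 'I_N) p : sig a b (msym (tperm a b) p) = sig a b p.
Proof.
rewrite /sig mmap_msym; apply: mmap_eqh => k.
by case: tpermP => [->|->|_ _]; rewrite ?eqxx //; case: ifP => // /eqP ->.
Qed.

Lemma self_opp N (x : {mpoly rat[N]}) : x = - x -> x = 0.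
Proof.
move=> E; have : (2%:R : rat) *: x = 0 by rewrite scaler_nat mulr2n {1}E addNr.
by move/eqP; rewrite scaler_eq0 pnatr_eq0 /= => /eqP.
Qed.

Lemma divvdm_gen N (p : {mpoly rat[N]}) (r : seq ('I_N * 'I_N)) :
  uniq r -> all (fun e : 'I_N * 'I_N => (e.1 < e.2)%N) r -> (forall e, e \in r -> sig e.1 e.2 p = 0) ->
  exists q, p = (\prod_(e <- r) ('X_e.1 - 'X_e.2)) * q.
Proof.
elim: r => [|e r IH] /=; first by move=> *; exists p; rewrite big_nil mul1r.
case/andP => enr ur; case/andP => he hr hs.
have [q Eq] : exists q, p = (\prod_(e <- r) ('X_e.1 - 'X_e.2)) * q.
  by apply: IH => // e' he'; apply: hs; rewrite inE he' orbT.
have := hs e (mem_head _ _).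
rewrite Eq /sig rmorphM /= -!/(sig _ _ _) => /eqP; rewrite mulf_eq0 => /orP [|/eqP sq].
  rewrite /sig rmorph_prod /= prodf_seq_eq0 => /hasP [[i j] hij /= /eqP].
  move: he enr; case: e {hs Eq IH} => a b /= ab enr.
  rewrite -/(sig a b _) => E; exfalso; move/eqP: E; apply/negP; apply: sigF => //.
    by have := allP hr _ hij.
  by apply: contraNneq enr => <-.
have [q' Eq'] := sig_div e.1 e.2 q; rewrite sq subr0 in Eq'.
by exists (- q'); rewrite big_cons Eq'; ring.
Qed.

Lemma vdm_pairs N : vdm N = \prod_(e <- [seq e : 'I_N * 'I_N <- index_enum ('I_N * 'I_N)%type | (e.1 < e.2)%N])
   ('X_e.1 - 'X_e.2).
Proof. by rewrite big_filter /vdm pair_big_dep. Qed.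

Lemma antisym_div N (p : {mpoly rat[N]}) :
  (forall a b : 'I_N, a != b -> msym (tperm a b) p = - p) -> exists q, p = vdm N * q.
Proof.
move=> H; rewrite vdm_pairs; apply: divvdm_gen.
- by rewrite filter_uniq // index_enum_uniq.
- by apply/allP => e; rewrite mem_filter => /andP[].
move=> [a b]; rewrite mem_filter /= => /andP[ab _].
apply: self_opp; rewrite -{1}sig_tperm H; last by rewrite neq_ltn ab.
by rewrite /sig rmorphN.
Qed.

Lemma schurA_antisym N lam (a b : 'I_N) : a != b ->
  msym (tperm a b) (schurA N lam) = - schurA N lam.
Proof.
move=> ab; rewrite /schurA raddf_sum /= -sumrN.
rewrite [RHS](reindex_inj (mulIg (tperm a b))) /=.
apply: eq_bigr => s _; rewrite msymZ -msymMm odd_permM odd_tperm ab signr_addb.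
by rewrite expr1 mulrN1 scaleNr opprK.
Qed.

Lemma schurP_spec N lam : is_schurP lam (schurP N lam).
Proof.
rewrite /schurP; apply: epsilon_spec.
have [q Eq] := antisym_div (@schurA_antisym N lam).
have nz : ((N - size lam)`!)%:R != 0 :> rat by rewrite pnatr_eq0 -lt0n fact_gt0.
exists (((N - size lam)`!)%:R^-1 *: q); rewrite /is_schurP Eq.
by rewrite -scalerAl scalerA divff // scale1r mulrC.
Qed.

Definition h0 n (k : 'I_n.+1) : {poly rat} := if k == ord0 then 1 else (k%:R)%:P * 'X.

Definition psi n (w : 'S_n.+1) (p : {mpoly rat[n.+1]}) : {poly rat} :=
  mmap (@polyC rat) (fun k => h0 (w k)) p.

Lemma psi_msym n (w : 'S_n.+1) p : psi 1 (msym w p) = psi w p.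
Proof. by rewrite /psi mmap_msym; apply: mmap_eqh => k; rewrite perm1. Qed.

Lemma psiXi n (w : 'S_n.+1) i : psi w 'X_i = h0 (w i).
Proof. by rewrite /psi mmapXi. Qed.

Lemma psiZ n (w : 'S_n.+1) c p : psi w (c *: p) = c%:P * psi w p.
Proof. by rewrite /psi mmapZ. Qed.

Lemma h00 n (k : 'I_n.+1) : (h0 k).[0] = (k == ord0)%:R.
Proof. by rewrite /h0; case: eqP => _; rewrite ?hornerC // hornerCM hornerX mulr0. Qed.

Definition evv n (k : 'I_n.+1) : rat := (k == ord0)%:R.

Lemma psi_ev n (p : {mpoly rat[n.+1]}) : (psi 1 p).[0] = p.@[evv (n:=n)].
Proof.
have := @mmapU n.+1 _ idfun (@evv n) (horner_eval 0 \o psi 1).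
apply => [c|i] /=; rewrite /horner_eval.
  by rewrite /psi mmapC hornerC.
by rewrite -/(psi _ _) psiXi perm1 h00.
Qed.

Definition bb n (w : 'S_n.+1) (i j : 'I_n.+1) : nat := ((w i != ord0) && (w j != ord0)).

Definition vF n (w : 'S_n.+1) i j (e : rat) : {poly rat} :=
  if (w i != ord0) && (w j != ord0) then ((w i)%:R + e * (w j)%:R)%:P
  else psi w ('X_i + e *: 'X_j).

Lemma psiF n (w : 'S_n.+1) i j e : psi w ('X_i + e *: 'X_j) = 'X^(bb w i j) * vF w i j e.
Proof.
rewrite /vF /bb; case: ifP => H; last by rewrite expr0 mul1r.
rewrite /psi rmorphD /= -/(psi _ _) mmapZ -/(psi _ _) !psiXi /h0.
case/andP: H => /negbTE -> /negbTE ->.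
by rewrite polyCD polyCM expr1; ring.
Qed.

Lemma vF0 n (w : 'S_n.+1) i j e : i != j -> (e == 1) || (e == -1) -> (vF w i j e).[0] != 0.
Proof.
move=> ij he; have wij : w i != w j by rewrite (inj_eq perm_inj).
rewrite /vF; case: ifP => [/andP[wi wj]|].
  rewrite hornerC; case/orP: he => /eqP ->.
    by rewrite mul1r -natrD pnatr_eq0 addn_eq0 negb_and -!lt0n !lt0n; apply/orP; left;
       move: wi; rewrite -val_eqE /= -lt0n.
  by rewrite mulN1r subr_eq0 eqr_nat val_eqE.
rewrite /psi rmorphD /= -/(psi _ _) mmapZ -/(psi _ _) !psiXi hornerD hornerM hornerC !h00.
have [wi0|wi0] := eqVneq (w i) ord0; have [wj0|wj0] := eqVneq (w j) ord0 => //= _.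
- by move: wij; rewrite wi0 wj0 eqxx.
- by rewrite mulr0 addr0 oner_eq0.
- by rewrite mulr1 add0r; case/orP: he => /eqP ->; rewrite ?oppr_eq0 oner_eq0.
Qed.

Lemma vF0_eq n (w : 'S_n.+1) i j e : i != j -> w i = ord0 -> (vF w i j e).[0] = 1.
Proof.
move=> ij wi; have wij : w i != w j by rewrite (inj_eq perm_inj).
rewrite /vF wi eqxx /=.
rewrite /psi rmorphD /= -/(psi _ _) mmapZ -/(psi _ _) !psiXi hornerD hornerM hornerC !h00.
by rewrite wi eqxx eq_sym -wi (negbTE wij) mulr0 addr0.
Qed.

Definition Pr n (e : 'I_n.+1 -> rat) : {mpoly rat[n.+1]} :=
  \prod_(i < n.+1) \prod_(j < n.+1 | (i < j)%N) ('X_i + e i *: 'X_j).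
Definition Eb n (w : 'S_n.+1) : nat := \sum_(i < n.+1) \sum_(j < n.+1 | (i < j)%N) bb w i j.
Definition VP n (w : 'S_n.+1) (e : 'I_n.+1 -> rat) : {poly rat} :=
  \prod_(i < n.+1) \prod_(j < n.+1 | (i < j)%N) vF w i j (e i).

Lemma psiPr n (w : 'S_n.+1) e : psi w (Pr e) = 'X^(Eb w) * VP w e.
Proof.
rewrite /Pr /psi rmorph_prod /Eb -prodrXr /VP -big_split /=; apply: eq_bigr => i _.
rewrite rmorph_prod -prodrXr -big_split /=; apply: eq_bigr => j _.
exact: psiF.
Qed.

Lemma VP0 n (w : 'S_n.+1) e : (forall i, (e i == 1) || (e i == -1)) -> (VP w e).[0] != 0.
Proof.
move=> he; rewrite /VP horner_prod; apply/prodf_neq0 => i _.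
rewrite horner_prod; apply/prodf_neq0 => j ij; apply: vF0 => //.
by rewrite neq_ltn ij.
Qed.

Lemma vdmPr n : vdm n.+1 = Pr (fun _ => -1).
Proof.
by apply: eq_bigr => i _; apply: eq_bigr => j _; rewrite scaleN1r.
Qed.

Definition eG n (lam : seq nat) (i : 'I_n.+1) : rat := if (i < size lam)%N then 1 else -1.
Definition Mo n (lam : seq nat) : {mpoly rat[n.+1]} :=
  \prod_(i < n.+1 | (i < size lam)%N) 'X_i ^+ nth 0%N lam i.

Lemma GPr n lam : schurG n.+1 lam = Mo n lam * Pr (eG lam).
Proof.
rewrite /schurG /Mo -mulrA; congr (_ * _).
rewrite /Pr [RHS](bigID (fun i : 'I_n.+1 => (i < size lam)%N)) /=; congr (_ * _).
  by apply: eq_bigr => i il; apply: eq_bigr => j _; rewrite /eG il scale1r.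
apply: eq_big => [i|i il]; first by rewrite leqNgt.
by apply: eq_bigr => j _; rewrite /eG ltnNge il scaleN1r.
Qed.

Definition sw n (w : 'S_n.+1) (lam : seq nat) : nat :=
  \sum_(i < n.+1 | (i < size lam)%N) ((w i != ord0) * nth 0%N lam i)%N.
Definition MV n (w : 'S_n.+1) (lam : seq nat) : {poly rat} :=
  \prod_(i < n.+1 | (i < size lam)%N)
     (if w i == ord0 then 1 else (((w i)%:R : rat) ^+ (nth 0%N lam i))%:P).

Lemma psiMo n (w : 'S_n.+1) lam : psi w (Mo n lam) = 'X^(sw w lam) * MV w lam.
Proof.
rewrite /Mo /psi rmorph_prod /sw -prodrXr /MV -big_split /=; apply: eq_bigr => i _.
rewrite rmorphXn /= -/(psi _ _) psiXi /h0.
case: eqP => _ /=; first by rewrite mul0n expr0 mul1r expr1n.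
by rewrite mul1n exprMn polyC_exp mulrC.
Qed.

Lemma msym_vdm n (w : 'S_n.+1) : msym w (vdm n.+1) = (-1) ^+ odd_perm w *: vdm n.+1.
Proof.
rewrite /vdm rmorph_prod /=.
rewrite (eq_bigr (fun i : 'I_n.+1 => \prod_(j < n.+1 | (i < j)%N) ('X_(w i) - 'X_(w j)))); last first.
  by move=> i _; rewrite rmorph_prod; apply: eq_bigr => j _; rewrite rmorphB /= !msymXi.
rewrite (vdm_sign (fun k => ('X_k : {mpoly rat[n.+1]}))).
by case: (odd_perm w); rewrite ?expr1 ?expr0 ?mulN1r ?scaleN1r ?mul1r ?scale1r.
Qed.

Lemma Eb_eq n (w : 'S_n.+1) : Eb w = Eb (1 : 'S_n.+1) /\
  VP w (fun _ => -1) = ((-1) ^+ odd_perm w)%:P * VP (1 : 'S_n.+1) (fun _ => -1).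
Proof.
have := psi_msym w (vdm n.+1); rewrite msym_vdm psiZ vdmPr !psiPr.
rewrite mulrCA => E; apply: Xorder (esym E) _ _.
- by apply: VP0 => i; rewrite eqxx orbT.
- rewrite hornerM hornerC mulf_eq0 negb_or signr_eq0 /=.
  by apply: VP0 => i; rewrite eqxx orbT.
Qed.

Lemma psiM n (w : 'S_n.+1) p q : psi w (p * q) = psi w p * psi w q.
Proof. by rewrite /psi rmorphM. Qed.

Lemma psi_sum n (w : 'S_n.+1) (I : Type) (r : seq I) (F : I -> {mpoly rat[n.+1]}) :
  psi w (\sum_(i <- r) F i) = \sum_(i <- r) psi w (F i).
Proof. by rewrite /psi raddf_sum. Qed.

Lemma main_eq n lam :
  ((n.+1 - size lam)`!)%:R * (schurP n.+1 lam).@[evv (n:=n)] *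
     (VP (1 : 'S_n.+1) (fun _ => -1)).[0] =
  \sum_(w : 'S_n.+1) (-1) ^+ odd_perm w *
     (0 ^+ sw w lam * (MV w lam).[0] * (VP w (eG lam)).[0]).
Proof.
set c : rat := ((n.+1 - size lam)`!)%:R.
have E := congr1 (psi 1) (schurP_spec n.+1 lam).
rewrite /schurA psi_sum in E.
have E3 : forall w : 'S_n.+1,
    psi 1 ((-1) ^+ odd_perm w *: msym w (schurG n.+1 lam)) =
    'X^(Eb (1:'S_n.+1)) * (((-1) ^+ odd_perm w)%:P *
       ('X^(sw w lam) * MV w lam * VP w (eG lam))).
  move=> w; rewrite psiZ psi_msym GPr psiM psiMo psiPr (proj1 (Eb_eq w)).
  by rewrite [RHS]mulrCA; congr (_ * _); rewrite mulrCA.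
rewrite (eq_bigr _ (fun w _ => E3 w)) -mulr_sumr in E.
rewrite psiZ psiM vdmPr psiPr in E.
have E4 : 'X^(Eb (1:'S_n.+1)) * (c%:P * (psi 1 (schurP n.+1 lam) * VP (1:'S_n.+1) (fun _ => -1)))
   = 'X^(Eb (1:'S_n.+1)) * \sum_(w : 'S_n.+1) ((-1) ^+ odd_perm w)%:P *
       ('X^(sw w lam) * MV w lam * VP w (eG lam)).
  by rewrite -E /c [in RHS](mulrCA (psi 1 _)) [RHS]mulrCA.
have nzX : ('X^(Eb (1:'S_n.+1)) : {poly rat}) != 0 by rewrite expf_neq0 // polyX_eq0.
have := congr1 (horner^~ 0) (mulfI nzX E4).
rewrite /= !hornerM hornerC psi_ev horner_sum mulrA => ->.
by apply: eq_bigr => w _; rewrite !hornerM hornerC hornerXn.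
Qed.

Lemma VP1_neq0 n : (VP (1 : 'S_n.+1) (fun _ => -1)).[0] != 0.
Proof. by apply: VP0 => i; rewrite eqxx orbT. Qed.

Lemma ev_P0 n lam : (1 < size lam)%N -> (size lam <= n.+1)%N ->
  all (fun k => 0 < k)%N lam -> (schurP n.+1 lam).@[evv (n:=n)] = 0.
Proof.
move=> H2 H3 Hpos; have := main_eq n lam.
rewrite big1 => [/eqP|w _].
  rewrite mulf_eq0 (negbTE (VP1_neq0 n)) orbF mulf_eq0 pnatr_eq0 (negbTE (lt0n_neq0 (fact_gt0 _))) /=.
  by move/eqP.
have [i il wi] : exists2 i : 'I_n.+1, (i < size lam)%N & w i != ord0.
  have i1lt : (1 < n.+1)%N by apply: leq_trans H2 H3.
  have [h|h] := eqVneq (w ord0) ord0; last by exists ord0 => //; apply: ltn_trans H2.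
  exists (Ordinal i1lt) => //; rewrite -h (inj_eq perm_inj) -val_eqE //.
have spos : (0 < sw w lam)%N.
  rewrite /sw (bigD1 i) //= wi mul1n.
  by rewrite addn_gt0; apply/orP; left; apply: (all_nthP 0%N Hpos).
by rewrite expr0n (negbTE (lt0n_neq0 spos)) !mul0r mulr0.
Qed.

Lemma sum_lt1 n (F : 'I_n.+1 -> nat) : (\sum_(i < n.+1 | (i < 1)%N) F i)%N = F ord0.
Proof. by rewrite big_mkcond big_ord_recl /= big1 ?addn0. Qed.

Lemma prod_lt1 n (F : 'I_n.+1 -> {poly rat}) : \prod_(i < n.+1 | (i < 1)%N) F i = F ord0.
Proof. by rewrite big_mkcond big_ord_recl /= big1 ?mulr1. Qed.

Lemma ev_P1 n k : (0 < k)%N -> (schurP n.+1 [:: k]).@[evv (n:=n)] = 1.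
Proof.
move=> kpos; have := main_eq n [:: k].
set V := (VP (1 : 'S_n.+1) (fun _ => -1)).[0].
have Hmem (w : 'S_n.+1) : (w \in perm_on [set~ ord0]) = (w ord0 == ord0).
  apply/subsetP/eqP => [H|H x].
    by apply/eqP/negPn/negP => /(H ord0); rewrite !inE eqxx.
  by rewrite inE => wx; rewrite !inE; apply: contraNneq wx => ->; rewrite H.
rewrite (eq_bigr (fun w : 'S_n.+1 => if w ord0 == ord0 then V else 0)); last first.
  move=> w _; rewrite /sw /MV /= sum_lt1 prod_lt1 /=.
  have [w0|w0] := eqVneq (w ord0) ord0; last by rewrite /= mul1n expr0n (negbTE (lt0n_neq0 kpos)) !mul0r mulr0.
  rewrite /= mul0n expr0 hornerC !mul1r.
  have -> : (VP w (eG [:: k])).[0] = (VP w (fun _ => -1)).[0].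
    rewrite /VP !horner_prod; apply: eq_bigr => i _; rewrite !horner_prod.
    apply: eq_bigr => j ij; rewrite /eG /=.
    case: ifP => // i1; have i0 : i = ord0 by apply/val_inj => /=; case: (val i) i1.
    by rewrite !vF0_eq // ?i0 // neq_ltn -i0 ij.
  by rewrite (proj2 (Eb_eq w)) hornerM hornerC mulrA -signr_addb addbb expr0 mul1r.
rewrite -big_mkcond (eq_bigl (fun w : 'S_n.+1 => w \in perm_on [set~ ord0])); last by move=> w; rewrite Hmem.
rewrite sumr_const card_perm cardsC1 card_ord /=.
rewrite subn1 /= => E.
have : (n`!)%:R * (schurP n.+1 [:: k]).@[evv (n:=n)] * V = (n`!)%:R * 1 * V by rewrite E mulr1 mulr_natl.
move/(mulIf (VP1_neq0 n))/(mulfI _); apply.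
by rewrite pnatr_eq0 (lt0n_neq0 (fact_gt0 _)).
Qed.

Lemma size_le_sumn (l : seq nat) : all (fun k => 0 < k)%N l -> (size l <= sumn l)%N.
Proof.
elim: l => //= x l IH /andP[x0 /IH h].
by rewrite -add1n leq_add.
Qed.

Unset Implicit Arguments.
Theorem lemma3p5 (n : nat) (a b : seq nat -> rat) :
  (0 < n)%N ->
  \sum_(l <- odd_partitions n) a l *: schurV n l
    = \sum_(l <- strict_partitions n) b l *: schurP n l ->
  \sum_(l <- odd_partitions n) a l = b [:: n].
Proof.
case: n => [//|n] _ H.
have := congr1 (meval (@evv n)) H.
rewrite !raddf_sum /=.
have memx : [:: n.+1] \in strict_partitions n.+1.
  rewrite mem_filter /is_strict_partition /= addn0 eqxx /= mem_undup.
  apply/flatten_mapP; exists 1%N; first by rewrite mem_iota.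
  by apply/allpairsP; exists (n.+1, [::]); split => //; rewrite mem_iota /= add1n ltnSn.
have us : uniq (strict_partitions n.+1) by rewrite filter_uniq // undup_uniq.
rewrite (bigD1_seq _ memx us) /= [X in _ = _ + X]big1_seq => [|l /andP[lx lin]]; last first.
  rewrite mevalZ; move: lin; rewrite mem_filter /is_strict_partition.
  case: l lx => [|x [|y l]] lx /andP[/and3P[_ Hpos /eqP Hs] _] //.
    by move: lx; rewrite /= addn0 in Hs; rewrite Hs eqxx.
  rewrite ev_P0 ?mulr0 //; rewrite -Hs; exact: size_le_sumn.
rewrite addr0 mevalZ ev_P1 // mulr1 => <-.
apply: eq_big_seq => l lin; rewrite mevalZ /schurV rmorph_prod /= big1_seq ?mulr1 //.
move=> k /andP[_ kl]; apply: ev_P1.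
move: lin; rewrite mem_filter /is_odd_partition => /andP[/and3P[_ /allP Hall _] _].
by case/andP: (Hall k kl).
Qed.
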